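(* Let $\hat{\mathcal D}$ be a marked DAG over $X$, $\kappa>0$, $q\in\mathcal Q_{\mathcal D}$, $c\in\mathbb R_+^X$, $p=\mathcal A(q,c)$ with associated values $\hat c_v$ ($v\in V$), and $Q=\Lambda(q)$. Then $$\sum_{uv\in A}\eta_{uv}Q_{uv}\hat c_v\le\big(\Delta_0(\mathcal D)+\Delta_I(\hat{\mathcal D})\big)\sum_{x\in X}c_xQ_x.$$
   Context: Let $X$ be a finite set. A DAG over $X$ is a finite directed acyclic graph $\mathcal D=(V,A)$ with $X\subseteq V$, a single source $r$, whose set of sinks is exactly $X$. A flow is $F\in\mathbb R_+^A$ with $\sum_{v:uv\in A}F_{uv}=\sum_{v:vu\in A}F_{vu}$ for $u\in V\setminus(X\cup\{r\})$; $F_u:=\sum_{v:uv\in A}F_{uv}$ for $u\notin X$, $F_x:=\sum_{u:ux\in A}F_{ux}$ for $x\in X$; unit flows have $F_r=1$. $\mathcal P_{\mathcal D}$ is the set of directed paths from $r$ to a sink. A marked DAG is $(\mathcal D,\omega,\theta)$ with $\omega\in\mathbb R_{>0}^A$, $\omega_{uv}>\omega_{vw}$ whenever $uv,vw\in A$, and $\theta\in\mathbb R_{>0}^A$ with $\sum_{v:uv\in A}\theta_{uv}=1$ for $u\in V\setminus X$. $\theta(\gamma):=\prod_{uv\in\gamma}\theta_{uv}$; $\Delta_0(\mathcal D)$ is the maximal number of arcs of a path in $\mathcal P_{\mathcal D}$, $\Delta_I(\hat{\mathcal D}):=\max_{\gamma\in\mathcal P_{\mathcal D}}\log(1/\theta(\gamma))$.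 Put $\eta_{uv}:=1+\log(1/\theta_{uv})$, $\delta_{uv}:=\theta_{uv}/\eta_{uv}$. $\mathcal Q_{\mathcal D}:=\{p\in\mathbb R_+^A:\sum_{v:uv\in A}p_{uv}=1\ \forall u\in V\setminus X\}$; $q^{(u)}:=(q_{uv})_{v:uv\in A}$; $\mathcal Q^{(u)}$ is the probability simplex on $\{v:uv\in A\}$; $\mathbb D^{(u)}(p\|p'):=\frac1\kappa\sum_{v:uv\in A}\frac{\omega_{uv}}{\eta_{uv}}\big[(p_v+\delta_{uv})\log\frac{p_v+\delta_{uv}}{p'_v+\delta_{uv}}+p'_v-p_v\big]$. The step map $\mathcal A(q,c)$ outputs $p\in\mathcal Q_{\mathcal D}$: set $\hat c_x:=c_x$ for $x\in X$; process $u\in V\setminus X$ so that each vertex comes after all its out-neighbours, setting $p^{(u)}:=\arg\min_{p'\in\mathcal Q^{(u)}}\{\mathbb D^{(u)}(p'\|q^{(u)})+\sum_vp'_v\hat c_v\}$ and $\hat c_u:=\sum_vp^{(u)}_v\hat c_v$. $\Lambda(q)$ is the unique unit flow $F$ with $F_{uv}=F_uq_{uv}$ for all $uv\in A$. *)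

(* Defs.v *)
From HB Require Import structures.
From mathcomp Require Import all_boot all_order all_algebra.
From mathcomp Require Import all_classical all_reals all_analysis.
Set Implicit Arguments. Unset Strict Implicit. Unset Printing Implicit Defensive.
Import Order.TTheory GRing.Theory Num.Theory.
Local Open Scope ring_scope.

(* A finite directed graph: vertex set V (a finType), arc relation E.
   Arc-indexed real vectors are represented as functions V -> V -> R;
   only their values on arcs (E u v) ever matter. *)

Section Defs.
Variables (R : realType) (V : finType) (E : rel V) (X : {set V}) (r : V).

Definition is_dag_over : Prop :=
  [/\ (forall u v, E u v -> ~~ connect E v u),
      (forall v, [forall u, ~~ E u v] = (v == r))
    & (forall v, (v \in X) = [forall w, ~~ E v w])].

Definition is_marking (omega theta : V -> V -> R) : Prop :=
  [/\ (forall u v, E u v -> 0 < omega u v),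
      (forall u v w, E u v -> E v w -> omega v w < omega u v),
      (forall u v, E u v -> 0 < theta u v)
    & (forall u, u \notin X -> \sum_(v | E u v) theta u v = 1)].

Definition in_QD (q : V -> V -> R) : Prop :=
  (forall u v, E u v -> 0 <= q u v) /\
  (forall u, u \notin X -> \sum_(v | E u v) q u v = 1).

Definition flow_at (F : V -> V -> R) (u : V) : R :=
  if u \in X then \sum_(w | E w u) F w u else \sum_(v | E u v) F u v.

Definition is_flow (F : V -> V -> R) : Prop :=
  (forall u v, E u v -> 0 <= F u v) /\
  (forall u, u \notin X -> u != r ->
     \sum_(v | E u v) F u v = \sum_(v | E v u) F v u).

Definition is_unit_flow (F : V -> V -> R) : Prop :=
  is_flow F /\ flow_at F r = 1.

Definition is_Lambda (q F : V -> V -> R) : Prop :=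
  is_unit_flow F /\ (forall u v, E u v -> F u v = flow_at F u * q u v).

(* paths in P_D: r :: s, a directed path from r ending at a sink *)
Definition rpath (s : seq V) : bool := path E r s && (last r s \in X).

Definition path_arcs (s : seq V) : seq (V * V) := zip (r :: s) s.

Definition theta_path (theta : V -> V -> R) (s : seq V) : R :=
  \prod_(a <- path_arcs s) theta a.1 a.2.

Definition Delta0 : R :=
  sup [set x : R | exists s, rpath s /\ x = (size s)%:R].

Definition DeltaI (theta : V -> V -> R) : R :=
  sup [set x : R | exists s, rpath s /\ x = ln (1 / theta_path theta s)].

Definition etaD (theta : V -> V -> R) (u v : V) : R := 1 + ln (1 / theta u v).
Definition deltaD (theta : V -> V -> R) (u v : V) : R := theta u v / etaD theta u v.

Definition in_simplex (u : V) (p : V -> R) : Prop :=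
  (forall v, E u v -> 0 <= p v) /\ \sum_(v | E u v) p v = 1.

Definition Du (kappa : R) (omega theta : V -> V -> R) (u : V) (p p' : V -> R) : R :=
  kappa^-1 * \sum_(v | E u v) (omega u v / etaD theta u v) *
    ((p v + deltaD theta u v) * ln ((p v + deltaD theta u v) / (p' v + deltaD theta u v))
      + p' v - p v).

Definition step_obj (kappa : R) (omega theta : V -> V -> R) (u : V)
    (q : V -> V -> R) (chat : V -> R) (p' : V -> R) : R :=
  Du kappa omega theta u p' (q u) + \sum_(v | E u v) p' v * chat v.

Definition is_step (kappa : R) (omega theta : V -> V -> R) (q : V -> V -> R)
    (c : V -> R) (p : V -> V -> R) (chat : V -> R) : Prop :=
  (forall x, x \in X -> chat x = c x) /\
  (forall u, u \notin X ->
     [/\ in_simplex u (p u),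
         (forall p' : V -> R, in_simplex u p' ->
            step_obj kappa omega theta u q chat (p u) <=
            step_obj kappa omega theta u q chat p')
       & chat u = \sum_(v | E u v) p u v * chat v]).

End Defs.

(* Main.v *)
Require Import Defs.
From HB Require Import structures.
From mathcomp Require Import all_boot all_order all_algebra.
From mathcomp Require Import all_classical all_reals all_analysis.
From mathcomp Require Import lra.
Import Order.TTheory GRing.Theory Num.Theory.
Local Open Scope ring_scope.
Set Implicit Arguments. Unset Strict Implicit.

Section Graph.
Variables (V : finType) (E : rel V) (X : {set V}) (r : V).
Hypothesis acyc : forall u v, E u v -> ~~ connect E v u.
Hypothesis srcH : forall v, [forall u, ~~ E u v] = (v == r).
Hypothesis snkH : forall v, (v \in X) = [forall w, ~~ E v w].

Lemma arc_notX u v : E u v -> u \notin X.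
Proof. by move=> h; rewrite snkH negb_forall; apply/existsP; exists v; rewrite h. Qed.

Definition desc v := #|[set w | connect E v w]|.
Definition anc v := #|[set w | connect E w v]|.

Lemma desc_lt u v : E u v -> (desc v < desc u)%N.
Proof.
move=> h; apply: proper_card; apply/properP; split.
  apply/fintype.subsetP => w; rewrite !inE => hw; apply: connect_trans hw.
  exact: connect1.
by exists u; rewrite !inE ?connect0 // (negbTE (acyc h)).
Qed.

Lemma anc_lt u v : E u v -> (anc u < anc v)%N.
Proof.
move=> h; apply: proper_card; apply/properP; split.
  apply/fintype.subsetP => w; rewrite !inE => hw; apply: connect_trans hw _.
  exact: connect1.
by exists v; rewrite !inE ?connect0 // (negbTE (acyc h)).
Qed.

Lemma reach v : connect E r v.
Proof.
suff: forall n v, (anc v < n)%N -> connect E r v by apply; apply: ltnSn.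
elim=> [//|n IH] w hw.
have [->|wr] := eqVneq w r; first exact: connect0.
have : ~~ [forall u, ~~ E u w] by rewrite srcH.
rewrite negb_forall => /existsP [u]; rewrite negbK => huw.
apply: connect_trans (IH u _) (connect1 huw).
by have := anc_lt huw; rewrite ltnS in hw; move=> h; apply: leq_trans h hw.
Qed.

Lemma path_size s x : path E x s -> (size s <= desc x)%N.
Proof.
elim: s x => [//|y s IH] x /= /andP [hxy hp].
by apply: leq_trans (desc_lt hxy); rewrite ltnS; apply: IH.
Qed.

Lemma path_arcs_E s x : path E x s -> forall a, a \in zip (x :: s) s -> E a.1 a.2.
Proof.
elim: s x => [//|y s IH] x /= /andP [hxy hp] a.
rewrite inE => /orP [/eqP -> //|]; exact: IH.
Qed.

End Graph.
Lemma zip_belast (T : Type) (x : T) s : zip (x :: s) s = zip (belast x s) s.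
Proof. by elim: s x => [//|y s IH] x /=; rewrite IH. Qed.

Lemma size_path_arcs (V : finType) (r : V) s : size (path_arcs r s) = size s.
Proof. by rewrite /path_arcs size_zip /= minnC; apply/minn_idPl; apply: leqnSn. Qed.

Lemma path_arcs_rcons (V : finType) (r : V) s v :
  path_arcs r (rcons s v) = rcons (path_arcs r s) (last r s, v).
Proof.
rewrite /path_arcs !zip_belast belast_rcons lastI zip_rcons //.
by rewrite size_belast.
Qed.

Lemma ln1div_pos (R : realType) (x : R) : 0 < x -> ln (1 / x) = - ln x.
Proof. by move=> hx; rewrite div1r lnV // posrE. Qed.

Lemma sum_eta_eq (R : realType) (V : finType) (theta : V -> V -> R) (l : seq (V * V)) :
  (forall a, a \in l -> 0 < theta a.1 a.2) ->
  \sum_(a <- l) etaD theta a.1 a.2 = (size l)%:R + ln (1 / \prod_(a <- l) theta a.1 a.2).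
Proof.
elim: l => [|a l IH] h.
  by rewrite !big_nil divr1 ln1 addr0.
have ha : 0 < theta a.1 a.2 by apply: h; rewrite inE eqxx.
have hl : forall b, b \in l -> 0 < theta b.1 b.2 by move=> b hb; apply: h; rewrite inE hb orbT.
have hP : 0 < \prod_(b <- l) theta b.1 b.2 by rewrite big_seq; apply: prodr_gt0 => b hb; apply: hl.
rewrite !big_cons IH // /etaD !ln1div_pos ?mulr_gt0 // lnM ?posrE //= -nat1r.
lra.
Qed.

Lemma kl_ge0 (R : realType) (a b : R) : 0 < a -> 0 < b -> 0 <= a * ln (a / b) + b - a.
Proof.
move=> ha hb.
have h1 := expR_ge1Dx (ln (b / a)).
rewrite lnK ?posrE ?divr_gt0 // in h1.
have h2 : ln (a / b) = - ln (b / a) by rewrite !ln_div ?posrE //; lra.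
have h3 : a * (b / a) = b by rewrite mulrC divfK // gt_eqF.
rewrite h2; nra.
Qed.

Lemma sum_le_size (R : realType) (T : Type) (l : seq T) (f : T -> R) (K : R) :
  (forall a, f a <= K) -> \sum_(a <- l) f a <= (size l)%:R * K.
Proof.
move=> h; elim: l => [|a l IH]; first by rewrite big_nil mul0r.
by rewrite big_cons /= -nat1r mulrDl mul1r lerD.
Qed.

Section Main.
Variables (R : realType) (V : finType) (E : rel V) (X : {set V}) (r : V) (theta : V -> V -> R).
Hypothesis acyc : forall u v, E u v -> ~~ connect E v u.
Hypothesis srcH : forall v, [forall u, ~~ E u v] = (v == r).
Hypothesis snkH : forall v, (v \in X) = [forall w, ~~ E v w].
Hypothesis thpos : forall u v, E u v -> 0 < theta u v.
Hypothesis thsum : forall u, u \notin X -> \sum_(v | E u v) theta u v = 1.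

Lemma theta_le1 u v : E u v -> theta u v <= 1.
Proof.
move=> h; rewrite -(thsum (arc_notX snkH h)) (bigD1 v) //= lerDl.
by apply: sumr_ge0 => w /andP [hw _]; exact/ltW/thpos.
Qed.

Lemma eta_ge1 u v : E u v -> 1 <= etaD theta u v.
Proof.
move=> h; rewrite /etaD ln1div_pos ?thpos // lerDl oppr_ge0.
exact/ln_le0/theta_le1.
Qed.

Definition etas s := \sum_(a <- path_arcs r s) etaD theta a.1 a.2.

Lemma etas_eq s : path E r s -> etas s = (size s)%:R + ln (1 / theta_path r theta s).
Proof.
move=> hp; rewrite /etas sum_eta_eq ?size_path_arcs //.
by move=> a ha; apply: thpos; exact: path_arcs_E hp a ha.
Qed.

Lemma etas_ge0 s : path E r s -> 0 <= etas s.
Proof.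
move=> hp; rewrite /etas big_seq; apply: sumr_ge0 => a ha.
apply: le_trans (eta_ge1 (path_arcs_E hp ha)); exact: ler01.
Qed.

Lemma etas_rcons s v : etas (rcons s v) = etas s + etaD theta (last r s) v.
Proof. by rewrite /etas path_arcs_rcons big_rcons. Qed.

Definition K := \sum_u \sum_v `|etaD theta u v|.

Lemma K_ge0 : 0 <= K.
Proof. by apply: sumr_ge0 => u _; apply: sumr_ge0 => v _. Qed.

Lemma eta_leK u v : etaD theta u v <= K.
Proof.
apply: le_trans (ler_norm _) _.
rewrite /K (bigD1 u) //= (bigD1 v) //= -addrA lerDl.
by apply: addr_ge0; apply: sumr_ge0 => w _ //; apply: sumr_ge0.
Qed.

Lemma etas_le s : path E r s -> etas s <= #|V|%:R * K.
Proof.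
move=> hp; rewrite /etas.
have h := @sum_le_size _ _ (path_arcs r s) (fun a => etaD theta a.1 a.2) K (fun a => eta_leK a.1 a.2).
apply: le_trans h _.
rewrite size_path_arcs; apply: ler_wpM2r; first exact: K_ge0.
rewrite ler_nat; apply: leq_trans (path_size acyc hp) _; exact: max_card.
Qed.


Definition S v := [set x : R | exists s, path E r s /\ last r s = v /\ x = etas s]%classic.

Lemma S_ub v : has_ubound (S v).
Proof. by exists (#|V|%:R * K) => x [s [hp [_ ->]]]; exact: etas_le. Qed.

Lemma S_n0 v : (S v !=set0)%classic.
Proof.
have /connectP [s hp hl] := reach acyc srcH v.
by exists (etas s); exists s; split.
Qed.

Definition H v := sup (S v).

Lemma H_ge0 v : 0 <= H v.
Proof.
have [x [s [hp [hl hx]]]] := S_n0 v.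
apply: le_trans (etas_ge0 hp) _; apply: ub_le_sup; first exact: S_ub.
by exists s.
Qed.

Lemma H_arc u v : E u v -> H u + etaD theta u v <= H v.
Proof.
move=> huv.
suff : H u <= H v - etaD theta u v by lra.
apply: ge_sup; first exact: S_n0.
move=> x [s [hp [hl ->]]].
have : S v (etas (rcons s v)).
  by exists (rcons s v); rewrite rcons_path last_rcons hp hl huv.
move=> /(ub_le_sup (S_ub v)); rewrite etas_rcons hl; rewrite /H; lra.
Qed.

Lemma D0_ub : has_ubound [set x : R | exists s, rpath E X r s /\ x = (size s)%:R]%classic.
Proof.
exists (#|V|%:R) => x [s [/andP [hp _] ->]].
rewrite ler_nat; apply: leq_trans (path_size acyc hp) _; exact: max_card.
Qed.

Lemma DI_ub : has_ubound [set x : R | exists s, rpath E X r s /\ x = ln (1 / theta_path r theta s)]%classic.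
Proof.
exists (#|V|%:R * K) => x [s [/andP [hp _] ->]].
have h1 := etas_eq hp; have h2 := etas_le hp.
have h3 : 0 <= (size s)%:R :> R by [].
lra.
Qed.

Lemma H_X x : x \in X -> H x <= @Delta0 R V E X r + @DeltaI R V E X r theta.
Proof.
move=> hx; apply: ge_sup; first exact: S_n0.
move=> y [s [hp [hl ->]]].
have hr : rpath E X r s by rewrite /rpath hp hl hx.
rewrite etas_eq //; apply: lerD.
  by apply: (ub_le_sup D0_ub); exists s.
by apply: (ub_le_sup DI_ub); exists s.
Qed.

End Main.

Lemma Du_self (R : realType) (V : finType) (E : rel V) kappa omega theta u (f : V -> R) :
  Du E kappa omega theta u f f = 0.
Proof.
rewrite /Du big1 ?mulr0 // => v _.
set a := f v + _.
suff -> : a * ln (a / a) = 0 by rewrite add0r subrr mulr0.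
have [->|a0] := eqVneq a 0; first by rewrite mul0r.
by rewrite divff // ln1 mulr0.
Qed.

Lemma Du_ge0 (R : realType) (V : finType) (E : rel V) (kappa : R) omega theta u (f g : V -> R) :
  0 < kappa -> (forall v, E u v -> 0 < omega u v) -> (forall v, E u v -> 0 < theta u v) ->
  (forall v, E u v -> 1 <= etaD theta u v) ->
  (forall v, E u v -> 0 <= f v) -> (forall v, E u v -> 0 <= g v) ->
  0 <= Du E kappa omega theta u f g.
Proof.
move=> hk hom hth het hf hg; rewrite /Du; apply: mulr_ge0; first by rewrite invr_ge0 ltW.
apply: sumr_ge0 => v huv.
have he := het v huv.
have hd : 0 < deltaD theta u v by rewrite /deltaD divr_gt0 ?thpos ?hth //; lra.
apply: mulr_ge0; first by apply: divr_ge0; [exact/ltW/hom | lra].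
have := @kl_ge0 R (f v + deltaD theta u v) (g v + deltaD theta u v).
have := hf v huv; have := hg v huv.
move=> h1 h2 h3; have := h3 ltac:(lra) ltac:(lra); lra.
Qed.

Theorem lemma4p11 (R : realType) (V : finType) (E : rel V) (X : {set V}) (r : V)
    (omega theta : V -> V -> R) (kappa : R) (q : V -> V -> R) (c : V -> R)
    (p : V -> V -> R) (chat : V -> R) (Q : V -> V -> R) :
  @is_dag_over V E X r ->
  @is_marking R V E X omega theta ->
  0 < kappa ->
  @in_QD R V E X q ->
  (forall x, x \in X -> 0 <= c x) ->
  @is_step R V E X kappa omega theta q c p chat ->
  @is_Lambda R V E X r q Q ->
  \sum_(u : V) \sum_(v | E u v) @etaD R V theta u v * Q u v * chat v
    <= (@Delta0 R V E X r + @DeltaI R V E X r theta) * \sum_(x in X) c x * @flow_at R V E X Q x.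
Proof.
move=> [acyc srcH snkH] [ompos omdec thpos thsum] hk [qnn qsum] c0 [cX stepH]
  [[[Qnn Qcons] Qr] Qmul].
have chat0 : forall v, 0 <= chat v.
  suff: forall n v, (desc E v < n)%N -> 0 <= chat v by move=> h v; apply: (h (desc E v).+1).
  elim=> [//|n IH] v hv.
  case: (boolP (v \in X)) => hvX; first by rewrite cX // c0.
  have [[pnn _] _ ->] := stepH v hvX.
  apply: sumr_ge0 => w hw; apply: mulr_ge0; first exact: pnn.
  apply: IH; have := desc_lt acyc hw; rewrite ltnS in hv; move=> h; exact: leq_trans h hv.
have chat_le : forall u, u \notin X -> chat u <= \sum_(v | E u v) q u v * chat v.
  move=> u hu; have [hs opt ->] := stepH u hu.
  have hq : in_simplex E u (q u) by split; [move=> v; apply: qnn | apply: qsum].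
  have := opt _ hq; rewrite /step_obj Du_self.
  have : 0 <= Du E kappa omega theta u (p u) (q u).
    apply: (Du_ge0 hk).
    - by move=> v; exact: ompos.
    - by move=> v; exact: thpos.
    - by move=> v huv; exact: (eta_ge1 snkH thpos thsum huv).
    - by move=> v; case: hs => + _; apply.
    - by move=> v; exact: qnn.
  lra.
set D := _ + _.
set Hf := H E r theta.
have Hge0 : forall v, 0 <= Hf v by move=> v; exact: H_ge0 acyc srcH snkH thpos thsum v.
have Qnng : forall u, 0 <= \sum_(v | E u v) Q u v by move=> u; apply: sumr_ge0 => v; exact: Qnn.
have Qnnd : forall v, 0 <= \sum_(u | E u v) Q u v by move=> v; apply: sumr_ge0 => u; exact: Qnn.
have s1 : \sum_u \sum_(v | E u v) etaD theta u v * Q u v * chat v <=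
          \sum_u \sum_(v | E u v) (Hf v - Hf u) * Q u v * chat v.
  apply: ler_sum => u _; apply: ler_sum => v huv.
  apply: (ler_wpM2r (chat0 v)); apply: (ler_wpM2r (Qnn _ _ huv)).
  have := H_arc theta acyc srcH huv; rewrite -/Hf; lra.
have s2 : \sum_u \sum_(v | E u v) (Hf v - Hf u) * Q u v * chat v =
   \sum_v Hf v * chat v * (\sum_(u | E u v) Q u v)
   - \sum_u Hf u * \sum_(v | E u v) Q u v * chat v.
  transitivity (\sum_u \sum_(v | E u v) Hf v * Q u v * chat v
                - \sum_u Hf u * \sum_(v | E u v) Q u v * chat v).
    rewrite -sumrB; apply: eq_bigr => u _; rewrite mulr_sumr -sumrB.
    by apply: eq_bigr => v _; rewrite !mulrBl mulrA.
  congr (_ - _).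
  rewrite (eq_bigr (fun u => \sum_v (if E u v then Hf v * Q u v * chat v else 0)));
    last by move=> u _; rewrite big_mkcond.
  rewrite exchange_big /=; apply: eq_bigr => v _; rewrite mulr_sumr [RHS]big_mkcond /=.
  apply: eq_bigr => u _; case: ifP => // _; by rewrite mulrAC.
have s3 : \sum_u Hf u * (if u \in X then 0 else (\sum_(v | E u v) Q u v) * chat u)
   <= \sum_u Hf u * \sum_(v | E u v) Q u v * chat v.
  apply: ler_sum => u _; apply: (ler_wpM2l (Hge0 u)); case: ifP => hu.
    by apply: sumr_ge0 => v huv; apply: mulr_ge0; [exact: Qnn | exact: chat0].
  have hu' : u \notin X by rewrite hu.
  have -> : \sum_(v | E u v) Q u v * chat v
      = (\sum_(v | E u v) Q u v) * \sum_(v | E u v) q u v * chat v.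
    rewrite mulr_sumr; apply: eq_bigr => v huv; rewrite Qmul // /flow_at hu.
    by rewrite mulrA.
  exact: (ler_wpM2l (Qnng u) (chat_le u hu')).
have s4 : \sum_v Hf v * chat v * (\sum_(u | E u v) Q u v)
   - \sum_u Hf u * (if u \in X then 0 else (\sum_(v | E u v) Q u v) * chat u)
   <= D * \sum_(x in X) c x * flow_at E X Q x.
  rewrite -sumrB mulr_sumr [X in _ <= X]big_mkcond /=; apply: ler_sum => v _; case: ifP => hv.
    rewrite mulr0 subr0 cX // /flow_at hv -mulrA.
    apply: ler_wpM2r; first by apply: mulr_ge0; [exact: c0 | exact: Qnnd].
    exact: H_X acyc srcH thpos v hv.
  have hv' : v \notin X by rewrite hv.
  have [->|hvr] := eqVneq v r.
    have -> : \sum_(u | E u r) Q u r = 0.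
      apply: big_pred0 => u; apply/negbTE.
      by have := srcH r; rewrite eqxx => /forallP; apply.
    have := Hge0 r; have := Qnng r; have := chat0 r; move=> a b e.
    rewrite mulr0 add0r oppr_le0; apply: mulr_ge0 => //; exact: mulr_ge0.
  rewrite -(Qcons v hv' hvr); lra.
apply: le_trans s1 _; rewrite s2; apply: le_trans s4; lra.
Qed.
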